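(* Let $\mathbb{K}$ be a field of characteristic not $2$ and $n\geq 3$. Let $\mathcal{V}$ be a linear subspace of $M_n(\mathbb{K})$ in which every matrix has at most two distinct eigenvalues in $\mathbb{K}$. If $A,B\in\mathcal{V}$ satisfy $\operatorname{rk}A\leq 1$, $\operatorname{rk}B\leq 1$ and $\operatorname{tr}A=\operatorname{tr}B=0$, then $\operatorname{tr}(AB)=0$. *)

(* Defs.v *)
From HB Require Import structures.
From mathcomp Require Import all_boot all_order all_algebra.
Set Implicit Arguments. Unset Strict Implicit. Unset Printing Implicit Defensive.
Import GRing.Theory.
Local Open Scope ring_scope.

Definition at_most_two_eigenvalues (K : fieldType) (n : nat) (M : 'M[K]_n) : Prop :=
  forall a b c : K, eigenvalue M a -> eigenvalue M b -> eigenvalue M c ->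
    [\/ a = b, a = c | b = c].

(* Main.v *)
Require Import Defs.
From HB Require Import structures.
From mathcomp Require Import all_boot all_order all_algebra.
Import GRing.Theory.
Local Open Scope ring_scope.

Lemma rank1_dec (K : fieldType) (n : nat) (A : 'M[K]_n) :
  (\rank A <= 1)%N -> A = 0 \/ exists (c : 'cV[K]_n) (r : 'rV[K]_n), A = c *m r.
Proof.
move: (col_base A) (row_base A) (mulmx_base A).
case: (\rank A) => [|[|k]] // C R <- _.
  by left; rewrite thinmx0 mul0mx.
by right; exists C, R.
Qed.

Arguments rank1_dec {K n A}.

Lemma mulr1x (K : fieldType) (n : nat) (w : 'rV[K]_n) (c : 'cV[K]_n) (r : 'rV[K]_n) :
  w *m (c *m r) = (w *m c) 0 0 *: r.
Proof. by rewrite mulmxA {1}[w *m c]mx11_scalar mul_scalar_mx. Qed.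

Lemma entD (K : fieldType) (n : nat) (e : K) (r s : 'rV[K]_n) (c : 'cV[K]_n) :
  ((e *: r + s) *m c) 0 0 = e * (r *m c) 0 0 + (s *m c) 0 0.
Proof. by rewrite mulmxDl -scalemxAl !mxE. Qed.

Theorem mainTheorem10 (K : fieldType) (n : nat) (V : {vspace 'M[K]_n})
  (hK : (2 \notin [pchar K])%N) (hn : (3 <= n)%N)
  (hV : forall M : 'M[K]_n, M \in V -> at_most_two_eigenvalues M)
  (A B : 'M[K]_n) (hA : A \in V) (hB : B \in V)
  (rA : (\rank A <= 1)%N) (rB : (\rank B <= 1)%N)
  (tA : \tr A = 0) (tB : \tr B = 0) :
  \tr (A *m B) = 0.
Proof.
have [A0|[c [r eA]]] := rank1_dec rA; first by rewrite A0 mul0mx mxtrace0.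
have [B0|[d [s eB]]] := rank1_dec rB; first by rewrite B0 mulmx0 mxtrace0.
have rc : (r *m c) 0 0 = 0 by rewrite -trace_mx11 -mxtrace_mulC -eA.
have sd : (s *m d) 0 0 = 0 by rewrite -trace_mx11 -mxtrace_mulC -eB.
set p := (r *m d) 0 0; set q := (s *m c) 0 0.
have eT : \tr (A *m B) = q * p.
  rewrite eA eB mulmxA mxtrace_mulC !mulmxA -mulmxA.
  rewrite {1}[s *m c]mx11_scalar mul_scalar_mx mxtraceZ.
  by rewrite trace_mx11.
rewrite eT; apply/eqP; case: eqP => // /eqP qp0; exfalso.
set t := (q * p)^-1.
set M := A + t *: B.
have MV : M \in V by rewrite memvD // memvZ.
have ev : forall l : K, l * l = 1 -> eigenvalue M l.
  move=> l hl; apply/eigenvalueP; exists ((l * q) *: r + s).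
    rewrite /M mulmxDr -scalemxAr eA eB !mulr1x !entD rc sd.
    rewrite mulr0 add0r addr0 scalerDr !scalerA mulrA hl mul1r.
    congr (_ + _); congr (_ *: _).
    by rewrite /t -/p -(mulrA l) mulrC -mulrA mulfV // mulr1.
  apply/negP => /eqP w0.
  have := congr1 (fun w : 'rV[K]_n => (w *m d) 0 0) w0.
  rewrite /= entD sd addr0 mul0mx => /eqP; rewrite -/p [X in _ == X]mxE.
  by rewrite -mulrA mulf_eq0 (negbTE qp0) orbF => /eqP l0; move: hl; rewrite l0 mul0r => /eqP; rewrite eq_sym oner_eq0.
have ev0 : eigenvalue M 0.
  rewrite /eigenvalue /eigenspace (_ : 0%:M = 0); last by apply/matrixP => i j; rewrite !mxE mul0rn.
  rewrite subr0 kermx_eq0 /row_free.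
  have : (\rank M <= 2)%N.
    apply: leq_trans (mxrank_add _ _) _.
    by rewrite (leq_add rA) // (leq_trans (mxrank_scale _ _)).
  by move=> h; apply/negP => /eqP h2; move: h; rewrite h2 => h; move: (leq_trans hn h).
have two0 : (2%:R : K) != 0.
  apply: contra hK => h; apply/andP; split => //.
have h1 := ev 1 (mulr1 1).
have hm1 : eigenvalue M (-1) by apply: ev; rewrite mulrNN mulr1.
case: (hV M MV 0 1 (-1) ev0 h1 hm1) => /eqP.
- by rewrite eq_sym oner_eq0.
- by rewrite eq_sym oppr_eq0 oner_eq0.
- by rewrite -subr_eq0 opprK -mulr2n (negbTE two0).
Qed.
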